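(* Let $0 \leq r < 1$. Define $\delta_k \in \{0,1\}$ for $k \geq 1$ inductively by $\delta_k = 1$ if $\frac{\sum_{i=1}^{k-1} 2i\delta_i + 2k}{k(k+1)} \leq r$, and $\delta_k = 0$ otherwise. For $k \geq 1$ let $w^{\langle k \rangle}$ be the word consisting of $2k$ copies of the letter $1 - \delta_k$, and let $w = w^{\langle 1 \rangle} w^{\langle 2 \rangle} w^{\langle 3 \rangle} \cdots$ (infinite concatenation). Then $\lim_{n \to \infty} |P(w^{(n)})|/n = r$.
   Context: $w^{(n)}$ denotes the initial subword of length $n$ of $w$. For a binary word $u = u_1 \cdots u_\ell$ of length $\ell$, $P(u)$ is the set of indices $i \geq 2$ such that at least one of the following holds: (i) $\ell \geq i$ and $u_{i-1} u_i = 00$; (ii) $\ell \geq i+2$ and $u_{i-1} u_i u_{i+1} u_{i+2} = 0100$; (iii) $\ell \geq i+3$ and $u_{i-1} \cdots u_{i+3} = 01010$. *)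

(* Defs.v *)
From Stdlib Require Import Reals Arith List.
Import ListNotations.
Open Scope R_scope.

(* The test defining delta_k, given s = sum_{i=1}^{k-1} 2 i delta_i :
   delta_k = 1  iff  (s + 2k) / (k(k+1)) <= r. *)
Definition dtest (r : R) (k s : nat) : bool :=
  if Rle_dec (INR (s + 2 * k) / INR (k * (k + 1))) r then true else false.

Fixpoint dsum (r : R) (k : nat) : nat :=
  match k with
  | O => O
  | S k' => (dsum r k' + (if dtest r (S k') (dsum r k') then 2 * S k' else 0))%nat
  end.

Definition delta (r : R) (k : nat) : nat :=
  if dtest r k (dsum r (k - 1)) then 1%nat else 0%nat.

Definition wblock (r : R) (k : nat) : list nat := repeat (1 - delta r k)%nat (2 * k).

Fixpoint wlist (r : R) (K : nat) : list nat :=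
  match K with
  | O => []
  | S K' => wlist r K' ++ wblock r (S K')
  end.

(* The infinite word w, 0-indexed letters: w r m is the (m+1)-th letter.
   wlist r (S m) has length (m+1)(m+2) > m, so this is the letter of the
   infinite concatenation. *)
Definition w (r : R) (m : nat) : nat := nth m (wlist r (S m)) 0%nat.

Definition prefix (r : R) (n : nat) : list nat := map (w r) (seq 0 n).

Definition letter (u : list nat) (i : nat) : nat := nth (i - 1) u 0%nat.

Definition inP (u : list nat) (i : nat) : bool :=
  let l := length u in
  (2 <=? i)%nat && (
     ((i <=? l)%nat && (letter u (i-1) =? 0)%nat && (letter u i =? 0)%nat)
  ||  ((i + 2 <=? l)%nat && (letter u (i-1) =? 0)%nat && (letter u i =? 1)%nat
        && (letter u (i+1) =? 0)%nat && (letter u (i+2) =? 0)%nat)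
  ||  ((i + 3 <=? l)%nat && (letter u (i-1) =? 0)%nat && (letter u i =? 1)%nat
        && (letter u (i+1) =? 0)%nat && (letter u (i+2) =? 1)%nat
        && (letter u (i+3) =? 0)%nat)).

(* P(u) as the list of its elements, i ranging over 2..length u
   (every condition forces i <= length u) *)
Definition Pset (u : list nat) : list nat :=
  filter (inP u) (seq 2 (length u - 1)).

(* Main.v *)
Require Import Defs.
From Stdlib Require Import Reals Arith List.
From Stdlib Require Import Lia Lra.
Import ListNotations.
Open Scope R_scope.

Section Comb.
Local Open Scope nat_scope.

Lemma wlist_length r K : length (wlist r K) = (K*(K+1))%nat.
Proof. induction K; simpl; [reflexivity|]. rewrite length_app, IHK. unfold wblock. rewrite repeat_length. nia. Qed.

Lemma wlist_prefix r K K' m : (K <= K')%nat -> (m < length (wlist r K))%nat ->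
  nth m (wlist r K') 0%nat = nth m (wlist r K) 0%nat.
Proof.
  intros H Hm. induction H; [reflexivity|]. simpl. rewrite app_nth1; [assumption|].
  rewrite wlist_length in *. nia.
Qed.

Lemma w_block r K m : (K*(K+1) <= m < (K+1)*(K+2))%nat -> w r m = (1 - delta r (S K))%nat.
Proof.
  intros Hm. unfold w. rewrite (wlist_prefix r (S K) (S m)); [| nia | rewrite wlist_length; nia].
  simpl wlist. rewrite app_nth2; rewrite wlist_length; [|lia].
  unfold wblock. apply repeat_spec with (n := (2 * S K)%nat). apply nth_In.
  rewrite repeat_length. nia.
Qed.

Lemma blk m : exists K, (K*(K+1) <= m < (K+1)*(K+2))%nat.
Proof.
  induction m. exists 0%nat; lia.
  destruct IHm as [K HK]. destruct (Nat.eq_dec (S m) ((K+1)*(K+2))).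
  exists (K+1)%nat; nia. exists K; nia.
Qed.

Lemma no_iso r m : w r m = 0%nat -> w r (S m) = 1%nat -> w r (S (S m)) = 0%nat -> False.
Proof.
  intros H0 H1 H2. destruct (blk (S m)) as [K HK].
  destruct (Nat.eq_dec (S m) (K*(K+1))).
  - rewrite (w_block r K (S m)) in H1 by lia. rewrite (w_block r K (S (S m))) in H2 by nia. lia.
  - rewrite (w_block r K (S m)) in H1 by lia. rewrite (w_block r K m) in H0 by lia. lia.
Qed.

Definition pz (r:R) (i:nat) : bool := (Nat.eqb (w r (i-2)) 0 && Nat.eqb (w r (i-1)) 0)%bool.
Definition Zf r n := length (filter (pz r) (seq 2 (n-1))).

Lemma length_prefix r n : length (prefix r n) = n.
Proof. unfold prefix. rewrite length_map, length_seq. reflexivity. Qed.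

Lemma letter_prefix r n j : (1 <= j <= n)%nat -> letter (prefix r n) j = w r (j-1).
Proof.
  intros H. unfold letter, prefix.
  rewrite nth_indep with (d' := w r 0) by (rewrite length_map, length_seq; lia).
  rewrite map_nth. rewrite seq_nth by lia. reflexivity.
Qed.

Lemma inP_prefix r n i : (2 <= i <= n)%nat -> inP (prefix r n) i = pz r i.
Proof.
  intros Hi. unfold inP. rewrite length_prefix.
  assert (A2 : letter (prefix r n) (i+1) = 0%nat -> (i+2 <= n)%nat -> w r (i-2) = 0%nat -> w r (i-1) = 1%nat -> False).
  { intros Ha Hb Hc Hd. rewrite letter_prefix in Ha by lia.
    apply (no_iso r (i-2)); [assumption| replace (S (i-2)) with (i-1) by lia; assumption |].
    replace (S (S (i-2))) with (i+1-1)%nat by lia. assumption. }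
  assert (A3 : letter (prefix r n) (i+1) = 0%nat -> (i+3 <= n)%nat -> w r (i-2) = 0%nat -> w r (i-1) = 1%nat -> False).
  { intros; apply A2; auto; lia. }
  rewrite (letter_prefix r n (i-1)) by lia. rewrite (letter_prefix r n i) by lia.
  unfold pz. replace (i-1-1)%nat with (i-2)%nat by lia.
  apply Bool.eq_iff_eq_true; split; intros H;
  repeat (rewrite ?Bool.andb_true_iff, ?Bool.orb_true_iff, ?Nat.eqb_eq, ?Nat.leb_le in * ).
  - decompose [and or] H; try (split; assumption); exfalso; eauto.
  - split; [lia|]. left; left. intuition lia.
Qed.

Lemma Pset_prefix r n : length (Pset (prefix r n)) = Zf r n.
Proof.
  unfold Pset, Zf. rewrite length_prefix. f_equal. apply filter_ext_in.
  intros i Hi. apply in_seq in Hi. apply inP_prefix; lia.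
Qed.

Lemma Zstep r n : Zf r (S n) = (Zf r n + (if andb (1 <=? n) (pz r (S n)) then 1 else 0))%nat.
Proof.
  destruct n. reflexivity.
  unfold Zf. replace (S (S n) - 1)%nat with (S n) by lia. replace (S n - 1)%nat with n by lia.
  rewrite seq_S, filter_app, length_app. cbn -[pz].
  replace (S (S n)) with (2 + n)%nat by lia.
  destruct (pz r (2+n)); simpl; lia.
Qed.

Lemma Zmono r n m : (n <= m)%nat -> (Zf r n <= Zf r m)%nat.
Proof. intros H; induction H; [lia|]. rewrite Zstep. lia. Qed.

Lemma delta01 r k : delta r k = 0%nat \/ delta r k = 1%nat.
Proof. unfold delta; destruct dtest; auto. Qed.

Lemma dsum_S r k : dsum r (S k) = (dsum r k + 2 * S k * delta r (S k))%nat.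
Proof.
  simpl dsum. unfold delta. replace (S k - 1)%nat with k by lia.
  destruct dtest; lia.
Qed.

Lemma blockZ r K j : (j <= 2*(K+1))%nat ->
  (Zf r (K*(K+1)) + delta r (S K)*(j-1) <= Zf r (K*(K+1)+j) <= Zf r (K*(K+1)) + delta r (S K)*j)%nat.
Proof.
  induction j; intros Hj.
  - rewrite Nat.add_0_r. lia.
  - specialize (IHj ltac:(lia)).
    replace (K*(K+1) + S j)%nat with (S (K*(K+1)+j)) by lia. rewrite Zstep.
    unfold pz. replace (S (K * (K + 1) + j) - 2)%nat with (K*(K+1)+j-1)%nat by lia.
    replace (S (K * (K + 1) + j) - 1)%nat with (K*(K+1)+j)%nat by lia.
    rewrite (w_block r K (K*(K+1)+j)) by nia.
    destruct j as [|j'].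
    + destruct (delta01 r (S K)) as [D|D]; rewrite D in *; simpl.
      * rewrite !Bool.andb_false_r, !Nat.add_0_r in *. lia.
      * rewrite !Nat.add_0_r in *. destruct (andb _ _); lia.
    + rewrite (w_block r K (K*(K+1)+S j' - 1)) by nia.
      rewrite (proj2 (Nat.leb_le 1 (K*(K+1)+S j'))) by lia.
      destruct (delta01 r (S K)) as [D|D]; rewrite D in *; simpl; lia.
Qed.

Lemma Zblocks r K : (Zf r (K*(K+1)) <= dsum r K <= Zf r (K*(K+1)) + K)%nat.
Proof.
  induction K. simpl. unfold Zf. simpl. lia.
  pose proof (blockZ r K (2*(K+1)) (le_n _)) as H.
  replace (K*(K+1)+2*(K+1))%nat with (S K*(S K+1))%nat in H by nia.
  rewrite dsum_S. destruct (delta01 r (S K)) as [D|D]; rewrite D in *; lia.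
Qed.
End Comb.

Lemma INR_blk K : INR (K*(K+1)) = INR K * (INR K + 1).
Proof. rewrite mult_INR, plus_INR. simpl. ring. Qed.

Lemma dsum_bounds r (hr0 : 0 <= r) (hr1 : r < 1) K :
  INR (dsum r K) <= r * (INR K * (INR K + 1)) /\
  r * (INR K * (INR K + 1)) - 2 * INR K <= INR (dsum r K).
Proof.
  induction K.
  - simpl. lra.
  - destruct IHK as [U L].
    assert (Hk : 0 <= INR K) by apply pos_INR.
    assert (HD : INR (S K * (S K + 1)) = (INR K + 1) * (INR K + 2)).
    { rewrite INR_blk, S_INR. ring. }
    assert (HDp : 0 < (INR K + 1) * (INR K + 2)) by nra.
    assert (h1 : 0 <= (1 - r) * (INR K + 1)) by (apply Rmult_le_pos; lra).
    assert (h2 : 0 <= r * (INR K + 1)) by (apply Rmult_le_pos; lra).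
    assert (E2 : INR (2 * S K) = 2 * (INR K + 1)) by (rewrite mult_INR, (S_INR K); simpl (INR 2); ring).
    change (dsum r (S K)) with (dsum r K + (if dtest r (S K) (dsum r K) then 2 * S K else 0))%nat.
    rewrite S_INR. unfold dtest.
    destruct (Rle_dec (INR (dsum r K + 2 * S K) / INR (S K * (S K + 1))) r) as [T|T].
    + rewrite HD, plus_INR, E2 in T. rewrite plus_INR, E2.
      apply Rmult_le_compat_r with (r := (INR K + 1) * (INR K + 2)) in T; [|lra].
      unfold Rdiv in T. rewrite Rmult_assoc, Rinv_l in T by lra. rewrite Rmult_1_r in T.
      split; nra.
    + apply Rnot_le_lt in T. rewrite HD, plus_INR, E2 in T. rewrite Nat.add_0_r.
      apply Rmult_lt_compat_r with (r := (INR K + 1) * (INR K + 2)) in T; [|lra].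
      unfold Rdiv in T. rewrite Rmult_assoc, Rinv_l in T by lra. rewrite Rmult_1_r in T.
      split; nra.
Qed.

Lemma Zf_bound r (hr0 : 0 <= r) (hr1 : r < 1) n K :
  (K*(K+1) <= n <= (K+1)*(K+2))%nat ->
  Rabs (INR (Zf r n) - r * INR n) <= 5 * INR K + 2.
Proof.
  intros Hn.
  assert (Hk : 0 <= INR K) by apply pos_INR.
  pose proof (Zmono r _ _ (proj1 Hn)) as M1.
  pose proof (Zmono r _ _ (proj2 Hn)) as M2.
  pose proof (Zblocks r K) as B1. pose proof (Zblocks r (S K)) as B2.
  replace (S K * (S K + 1))%nat with ((K+1)*(K+2))%nat in B2 by lia.
  destruct (dsum_bounds r hr0 hr1 K) as [_ L].
  destruct (dsum_bounds r hr0 hr1 (S K)) as [U _].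
  rewrite S_INR in U.
  assert (Z1 : INR (Zf r n) <= r * ((INR K + 1) * (INR K + 1 + 1))).
  { apply Rle_trans with (INR (dsum r (S K))); [|exact U]. apply le_INR. lia. }
  assert (Z2 : r * (INR K * (INR K + 1)) - 2 * INR K - INR K <= INR (Zf r n)).
  { assert (INR (dsum r K) <= INR (Zf r n) + INR K).
    { rewrite <- plus_INR. apply le_INR. lia. } lra. }
  assert (N1 : INR K * (INR K + 1) <= INR n) by (rewrite <- INR_blk; apply le_INR; lia).
  assert (N2 : INR n <= (INR K + 1) * (INR K + 2)).
  { replace ((INR K + 1) * (INR K + 2)) with (INR ((K+1)*(K+2))) by (rewrite mult_INR, !plus_INR; simpl; ring).
    apply le_INR; lia. }
  assert (h1 : 0 <= r * (INR n - INR K * (INR K + 1))) by (apply Rmult_le_pos; lra).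
  assert (h2 : 0 <= r * ((INR K + 1) * (INR K + 2) - INR n)) by (apply Rmult_le_pos; lra).
  apply Rabs_le. split; nra.
Qed.

Theorem lemma4p17 (r : R) (hr0 : 0 <= r) (hr1 : r < 1) :
  Un_cv (fun n : nat => INR (length (Pset (prefix r n))) / INR n) r.
Proof.
  intros eps Heps.
  destruct (archimed_cor1 (eps / 6)) as [K0 [HK0 HK0p]]; [lra|].
  exists (K0 * (K0 + 1))%nat. intros n Hn.
  destruct (blk n) as [K HK].
  assert (KK : (K0 <= K)%nat).
  { destruct (Nat.le_gt_cases K0 K) as [|G]; [assumption|].
    exfalso. assert ((K+1)*(K+2) <= K0*(K0+1))%nat by nia. lia. }
  assert (HK0r : 0 < INR K0) by (apply lt_0_INR; lia).
  assert (HKr : INR K0 <= INR K) by (apply le_INR; lia).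
  assert (E6 : 6 < eps * INR K0).
  { apply Rmult_lt_compat_r with (r := INR K0) in HK0; [|lra].
    rewrite Rinv_l in HK0 by lra. lra. }
  pose proof (Zf_bound r hr0 hr1 n K ltac:(lia)) as B.
  assert (N1 : INR K * (INR K + 1) <= INR n) by (rewrite <- INR_blk; apply le_INR; lia).
  assert (Hnp : 0 < INR n) by nra.
  unfold R_dist. rewrite Pset_prefix.
  replace (INR (Zf r n) / INR n - r) with ((INR (Zf r n) - r * INR n) / INR n) by (field; lra).
  unfold Rdiv. rewrite Rabs_mult, Rabs_inv, (Rabs_right (INR n)) by lra.
  apply (Rmult_lt_reg_r (INR n)); [lra|].
  rewrite Rmult_assoc, Rinv_l, Rmult_1_r by lra.
  assert (6 < eps * INR K) by nra.
  assert (eps * (INR K * (INR K + 1)) <= eps * INR n) by (apply Rmult_le_compat_l; lra).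
  nra.
Qed.
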